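(* Suppose that, after a permutation of its columns, $A=[A^{(1)},\dots,A^{(k)}]$ where each $A^{(i)}\in\mathbb{R}^{n\times m_i}$ is a submatrix of $A$ and $\mathrm{New}(A^{(1)}),\dots,\mathrm{New}(A^{(k)})$ are mutually disjoint faces of $\mathrm{New}(A)$. Then (with coordinates of $\mathbb{R}^m$ grouped accordingly) $C_{\mathrm{NNS}}(A)=C_{\mathrm{NNS}}(A^{(1)})\times\cdots\times C_{\mathrm{NNS}}(A^{(k)})$ and $C_{\mathrm{SAGE}}(A)=C_{\mathrm{SAGE}}(A^{(1)})\times\cdots\times C_{\mathrm{SAGE}}(A^{(k)})$.
   Context: Let $A\in\mathbb{R}^{n\times m}$ have distinct columns $a_1,\dots,a_m$. For $c\in\mathbb{R}^m$, $\mathrm{Sig}(A,c)$ denotes the function $x\mapsto\sum_{i=1}^m c_i\exp(a_i^\top x)$ on $\mathbb{R}^n$. $\mathrm{New}(A)=\mathrm{conv}\{a_1,\dots,a_m\}$ is the Newton polytope. $C_{\mathrm{NNS}}(A)=\{c\in\mathbb{R}^m:\mathrm{Sig}(A,c)(x)\ge 0\ \forall x\in\mathbb{R}^n\}$. For $k\in[m]$, the $k$-th AGE cone is $C_{\mathrm{AGE}}(A,k)=\{c\in C_{\mathrm{NNS}}(A): c_i\ge 0\ \forall i\ne k\}$, and the SAGE cone is the Minkowski sum $C_{\mathrm{SAGE}}(A)=\sum_{k=1}^m C_{\mathrm{AGE}}(A,k)$. These definitions apply equally to any submatrix of $A$. *)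

(* Defs.v *)
From Stdlib Require Import Reals List Arith.
Import ListNotations.
Open Scope R_scope.

(* Vectors of R^n are represented by functions nat -> R, of which only the
   coordinates 0..n-1 are ever used. *)
Definition vec := nat -> R.

Definition lsum (l : list nat) (f : nat -> R) : R :=
  fold_right (fun i acc => f i + acc) 0 l.

Definition dot (n : nat) (x y : vec) : R := lsum (seq 0 n) (fun r => x r * y r).

(* The matrix A in R^{n x m} is given by its columns A 0, ..., A (m-1).
   A submatrix is given by a list S of column indices; coefficient vectors
   c for the submatrix are functions nat -> R of which only the entries
   indexed by S matter. *)
Definition cols (m : nat) : list nat := seq 0 m.

Definition distinct_cols (n m : nat) (A : nat -> vec) : Prop :=
  forall i j, (i < m)%nat -> (j < m)%nat -> i <> j ->
    exists r, (r < n)%nat /\ A i r <> A j r.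

Definition Sig (n : nat) (A : nat -> vec) (S : list nat) (c : vec) (x : vec) : R :=
  lsum S (fun i => c i * exp (dot n (A i) x)).

Definition NNS (n : nat) (A : nat -> vec) (S : list nat) (c : vec) : Prop :=
  forall x : vec, 0 <= Sig n A S c x.

Definition AGE (n : nat) (A : nat -> vec) (S : list nat) (k : nat) (c : vec) : Prop :=
  NNS n A S c /\ (forall i, In i S -> i <> k -> 0 <= c i).

Definition SAGE (n : nat) (A : nat -> vec) (S : list nat) (c : vec) : Prop :=
  exists C : nat -> vec,
    (forall k, In k S -> AGE n A S k (C k)) /\
    (forall i, In i S -> c i = lsum S (fun k => C k i)).

(* Newton polytope New(A_S) = conv{a_i : i in S}, as a subset of R^n
   (only coordinates < n are constrained). *)
Definition New (n : nat) (A : nat -> vec) (S : list nat) (x : vec) : Prop :=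
  exists lam : nat -> R,
    (forall i, In i S -> 0 <= lam i) /\ lsum S lam = 1 /\
    (forall r, (r < n)%nat -> x r = lsum S (fun i => lam i * A i r)).

Definition is_face (n : nat) (F P : vec -> Prop) : Prop :=
  exists (w : vec) (b : R),
    (forall x, P x -> dot n w x <= b) /\
    (forall x, F x <-> (P x /\ dot n w x = b)).

Definition disjoint (F G : vec -> Prop) : Prop := forall x, ~ (F x /\ G x).

(* The i-th block of columns, for a block assignment g : [m] -> [k]. *)
Definition block (m : nat) (g : nat -> nat) (i : nat) : list nat :=
  filter (fun j => Nat.eqb (g j) i) (seq 0 m).

(* Main.v *)
Require Import Defs.
From Stdlib Require Import Reals List Arith Lra Lia.
Import ListNotations.
Open Scope R_scope.

Lemma lsum_nil f : lsum [] f = 0. Proof. reflexivity. Qed.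
Lemma lsum_cons a l f : lsum (a :: l) f = f a + lsum l f. Proof. reflexivity. Qed.

Lemma lsum_ext l f h : (forall i, In i l -> f i = h i) -> lsum l f = lsum l h.
Proof.
  induction l as [|a l IH]; intros H; simpl; auto.
  rewrite (H a (or_introl eq_refl)), IH; auto. intros; apply H; simpl; auto.
Qed.

Lemma lsum_plus l f h : lsum l (fun i => f i + h i) = lsum l f + lsum l h.
Proof. induction l as [|a l IH]; simpl; [lra|rewrite IH; lra]. Qed.

Lemma lsum_zero l : lsum l (fun _ => 0) = 0.
Proof. induction l as [|a l IH]; simpl; [lra|rewrite IH; lra]. Qed.

Lemma lsum_nonneg l f : (forall i, In i l -> 0 <= f i) -> 0 <= lsum l f.
Proof.
  induction l as [|a l IH]; intros H; simpl; [lra|].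
  assert (0 <= f a) by (apply H; simpl; auto).
  assert (0 <= lsum l f) by (apply IH; intros; apply H; simpl; auto). lra.
Qed.

Lemma lsum_scal l f r : lsum l f * r = lsum l (fun i => f i * r).
Proof. induction l as [|a l IH]; simpl; [lra|rewrite <- IH; lra]. Qed.

Lemma lsum_scal_l l f r : r * lsum l f = lsum l (fun i => r * f i).
Proof. induction l as [|a l IH]; simpl; [lra|rewrite <- IH; lra]. Qed.

Lemma lsum_split (p : nat -> bool) l f :
  lsum l f = lsum (filter p l) f + lsum (filter (fun j => negb (p j)) l) f.
Proof.
  induction l as [|a l IH]; simpl; [lra|].
  destruct (p a); simpl; rewrite IH; lra.
Qed.

Lemma lsum_if (p : nat -> bool) l f :
  lsum l (fun i => if p i then f i else 0) = lsum (filter p l) f.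
Proof.
  induction l as [|a l IH]; simpl; [lra|].
  destruct (p a); simpl; rewrite IH; lra.
Qed.

Lemma lsum_ind0 l j h : ~ In j l ->
  lsum l (fun i => if Nat.eqb i j then h i else 0) = 0.
Proof.
  intros H. transitivity (lsum l (fun _ => 0)); [|apply lsum_zero]. apply lsum_ext. intros i Hi.
  destruct (Nat.eqb_spec i j); [subst; contradiction|reflexivity].
Qed.

Lemma lsum_ind l j h : NoDup l -> In j l ->
  lsum l (fun i => if Nat.eqb i j then h i else 0) = h j.
Proof.
  induction l as [|a l IH]; intros Hn Hi; [destruct Hi|].
  inversion Hn; subst. simpl.
  destruct (Nat.eqb_spec a j).
  - subst. rewrite lsum_ind0; auto; lra.
  - destruct Hi as [Hi|Hi]; [congruence|]. rewrite IH; auto; lra.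
Qed.

Lemma lsum_blocks (g : nat -> nat) k l f :
  (forall j, In j l -> (g j < k)%nat) ->
  lsum l f = lsum (seq 0 k) (fun i => lsum (filter (fun j => Nat.eqb (g j) i) l) f).
Proof.
  induction l as [|a l IH]; intros H.
  - simpl. rewrite lsum_zero. reflexivity.
  - simpl.
    transitivity (lsum (seq 0 k) (fun i => (if Nat.eqb i (g a) then f a else 0) +
       lsum (filter (fun j => Nat.eqb (g j) i) l) f)).
    + rewrite lsum_plus. rewrite (lsum_ind (seq 0 k) (g a) (fun _ => f a)).
      * rewrite IH by (intros; apply H; simpl; auto). reflexivity.
      * apply seq_NoDup.
      * apply in_seq. specialize (H a (or_introl eq_refl)). lia.
    + apply lsum_ext. intros i _. simpl. rewrite Nat.eqb_sym. destruct (Nat.eqb (g a) i); simpl; lra.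
Qed.

Lemma dot_comm n x y : dot n x y = dot n y x.
Proof. unfold dot. apply lsum_ext. intros; lra. Qed.

Lemma dot_lin n a x t w :
  dot n a (fun r => x r + t * w r) = dot n a x + t * dot n a w.
Proof.
  unfold dot. rewrite lsum_scal_l, <- lsum_plus. apply lsum_ext. intros; lra.
Qed.

Lemma tail_lem l (u d : nat -> R) : (forall j, In j l -> d j < 0) ->
  forall eps, 0 < eps -> exists T, forall t, T <= t ->
    Rabs (lsum l (fun j => u j * exp (t * d j))) < eps.
Proof.
  induction l as [|a l IH]; intros Hd eps He.
  - exists 0. intros. simpl. rewrite Rabs_R0. lra.
  - destruct (IH (fun j Hj => Hd j (or_intror Hj)) (eps/2)) as [T1 HT1]; [lra|].
    set (e' := eps / (2 * (Rabs (u a) + 1))).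
    assert (Hu : 0 <= Rabs (u a)) by apply Rabs_pos.
    assert (He' : 0 < e') by (unfold e'; apply Rdiv_lt_0_compat; lra).
    assert (Hda : d a < 0) by (apply Hd; simpl; auto).
    exists (Rmax T1 (ln e' / d a)). intros t Ht.
    assert (Ht1 : T1 <= t) by (eapply Rle_trans; [apply Rmax_l|exact Ht]).
    assert (Ht2 : ln e' / d a <= t) by (eapply Rle_trans; [apply Rmax_r|exact Ht]).
    assert (Htd : t * d a <= ln e').
    { assert (ln e' = (ln e' / d a) * d a) by (field; lra).
      rewrite H. nra. }
    assert (Hex : exp (t * d a) <= e').
    { rewrite <- (exp_ln e') by lra. destruct (Rle_lt_or_eq_dec _ _ Htd) as [H|H].
      - left. apply exp_increasing. exact H.
      - rewrite H. lra. }
    assert (Hsm : Rabs (u a) * e' < eps / 2).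
    { unfold e'. apply (Rmult_lt_reg_r (2 * (Rabs (u a) + 1))); [lra|].
      field_simplify; [nra|lra]. }
    simpl. eapply Rle_lt_trans; [apply Rabs_triang|].
    rewrite Rabs_mult, (Rabs_right (exp _)) by (left; apply exp_pos).
    specialize (HT1 t Ht1).
    assert (Rabs (u a) * exp (t * d a) <= Rabs (u a) * e') by (apply Rmult_le_compat_l; lra).
    lra.
Qed.

Lemma new_col n A S j : NoDup S -> In j S -> New n A S (A j).
Proof.
  intros Hn Hj. exists (fun i => if Nat.eqb i j then 1 else 0). split; [|split].
  - intros i _. destruct (Nat.eqb i j); lra.
  - apply (lsum_ind S j (fun _ => 1)); auto.
  - intros r _. symmetry.
    transitivity (lsum S (fun i => if Nat.eqb i j then A i r else 0)).
    + apply lsum_ext. intros i _. destruct (Nat.eqb i j); lra.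
    + exact (lsum_ind S j (fun i => A i r) Hn Hj).
Qed.

Lemma in_block m g i j : In j (block m g i) <-> (j < m)%nat /\ g j = i.
Proof.
  unfold block. rewrite filter_In, in_seq, Nat.eqb_eq. lia.
Qed.

Lemma nodup_block m g i : NoDup (block m g i).
Proof. apply NoDup_filter, seq_NoDup. Qed.

Lemma nns_proj (n m k : nat) (A : nat -> vec) (g : nat -> nat)
  (Hg : forall j, (j < m)%nat -> (g j < k)%nat)
  (Hface : forall i, (i < k)%nat ->
     is_face n (New n A (block m g i)) (New n A (cols m)))
  (Hdisj : forall i j, (i < k)%nat -> (j < k)%nat -> i <> j ->
     disjoint (New n A (block m g i)) (New n A (block m g j)))
  c i : (i < k)%nat -> NNS n A (cols m) c -> NNS n A (block m g i) c.
Proof.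
  intros Hi Hc x.
  destruct (Hface i Hi) as (w & b & Hle & Hiff).
  set (d := fun j => dot n (A j) w - b).
  set (u := fun j => c j * exp (dot n (A j) x)).
  set (notF := filter (fun j => negb (Nat.eqb (g j) i)) (cols m)).
  assert (HdF : forall j, In j (block m g i) -> d j = 0).
  { intros j Hj. unfold d. rewrite dot_comm.
    assert (Hn := proj1 (Hiff (A j)) (new_col n A _ j (nodup_block m g i) Hj)).
    destruct Hn as [_ Hn]. lra. }
  assert (HdN : forall j, In j notF -> d j < 0).
  { intros j Hj. unfold notF in Hj. rewrite filter_In in Hj. destruct Hj as [Hj Hgj].
    unfold cols in Hj. apply in_seq in Hj.
    assert (HS : New n A (cols m) (A j)).
    { apply new_col; [apply seq_NoDup|apply in_seq; lia]. }
    assert (H1 := Hle _ HS). unfold d. rewrite dot_comm.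
    destruct (Rle_lt_or_eq_dec _ _ H1) as [H|H]; [lra|exfalso].
    assert (HB : New n A (block m g i) (A j)) by (apply Hiff; auto).
    assert (HB2 : New n A (block m g (g j)) (A j)).
    { apply new_col; [apply nodup_block|apply in_block; split; [lia|reflexivity]]. }
    destruct (Nat.eqb_spec (g j) i) as [E|E]; [discriminate|].
    apply (Hdisj i (g j) Hi (Hg j ltac:(lia)) (not_eq_sym E) (A j)). auto. }
  destruct (Rle_lt_dec 0 (Sig n A (block m g i) c x)) as [H|H]; [exact H|exfalso].
  destruct (tail_lem notF u d HdN (- Sig n A (block m g i) c x)) as [T HT]; [lra|].
  specialize (HT T (Rle_refl T)).
  set (x' := fun r => x r + T * w r).
  assert (Hpos : 0 <= Sig n A (cols m) c x' * exp (- (T * b))).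
  { apply Rmult_le_pos; [apply Hc|left; apply exp_pos]. }
  assert (Heq : Sig n A (cols m) c x' * exp (- (T * b)) =
     Sig n A (block m g i) c x + lsum notF (fun j => u j * exp (T * d j))).
  { unfold Sig. rewrite lsum_scal.
    rewrite (lsum_split (fun j => Nat.eqb (g j) i)). fold notF.
    transitivity (lsum (block m g i) (fun j => u j * exp (T * d j)) +
                  lsum notF (fun j => u j * exp (T * d j))).
    - assert (E : forall j, c j * exp (dot n (A j) x') * exp (- (T * b)) =
                  u j * exp (T * d j)).
      { intros j. unfold x'. rewrite dot_lin. unfold u, d.
        rewrite Rmult_assoc, <- exp_plus, Rmult_assoc, <- exp_plus.
        f_equal. f_equal. ring. }
      f_equal; apply lsum_ext; intros; apply E.
    - f_equal. apply lsum_ext. intros j Hj. rewrite HdF by exact Hj.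
      rewrite Rmult_0_r, exp_0. unfold u. ring. }
  assert (Habs := Rabs_def2 _ _ HT). lra.
Qed.

Lemma fin_choice {T : Type} (P : nat -> T -> Prop) (t0 : T) k :
  (forall i, (i < k)%nat -> exists C, P i C) ->
  exists F : nat -> T, forall i, (i < k)%nat -> P i (F i).
Proof.
  induction k as [|k IH]; intros H.
  - exists (fun _ => t0). intros; lia.
  - destruct IH as [F HF]; [intros; apply H; lia|].
    destruct (H k ltac:(lia)) as [C0 HC0].
    exists (fun i => if Nat.eqb i k then C0 else F i). intros i Hi.
    destruct (Nat.eqb_spec i k); [subst; auto|apply HF; lia].
Qed.

Theorem mainTheorem9 (n m k : nat) (A : nat -> vec) (g : nat -> nat)
  (Hdist : distinct_cols n m A)
  (Hg : forall j, (j < m)%nat -> (g j < k)%nat)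
  (Hface : forall i, (i < k)%nat ->
     is_face n (New n A (block m g i)) (New n A (cols m)))
  (Hdisj : forall i j, (i < k)%nat -> (j < k)%nat -> i <> j ->
     disjoint (New n A (block m g i)) (New n A (block m g j))) :
  (forall c : vec, NNS n A (cols m) c <->
     (forall i, (i < k)%nat -> NNS n A (block m g i) c)) /\
  (forall c : vec, SAGE n A (cols m) c <->
     (forall i, (i < k)%nat -> SAGE n A (block m g i) c)).
Proof.
  assert (Hproj := nns_proj n m k A g Hg Hface Hdisj).
  assert (HinS : forall j, In j (cols m) <-> (j < m)%nat).
  { intros j. unfold cols. rewrite in_seq. lia. }
  split.
  - intros c. split.
    + intros Hc i Hi. apply Hproj; auto.
    + intros H x. unfold Sig.
      rewrite (lsum_blocks g k (cols m)).
      * apply lsum_nonneg. intros i Hi. apply in_seq in Hi. apply H. lia.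
      * intros j Hj. apply Hg, HinS, Hj.
  - intros c. split.
    + intros [C [HA HC]] i Hi.
      set (D := fun j => lsum (filter (fun k' => negb (Nat.eqb (g k') i)) (cols m))
                              (fun k' => C k' j)).
      assert (HD : forall j, In j (block m g i) -> 0 <= D j).
      { intros j Hj. apply in_block in Hj. apply lsum_nonneg. intros k' Hk'.
        apply filter_In in Hk'. destruct Hk' as [Hk' Hne].
        destruct (Nat.eqb_spec (g k') i); [discriminate|].
        apply (HA k' Hk'). apply HinS; lia. intros ->. tauto. }
      exists (fun k' j => C k' j + (if Nat.eqb j k' then D j else 0)). split.
      * intros k' Hk'. assert (Hk'S : In k' (cols m)).
        { apply in_block in Hk'. apply HinS. lia. }
        split.
        -- intros x. unfold Sig.
           rewrite (lsum_ext _ _ (fun j => C k' j * exp (dot n (A j) x) +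
               (if Nat.eqb j k' then D j else 0) * exp (dot n (A j) x)))
             by (intros; ring).
           rewrite lsum_plus. apply Rplus_le_le_0_compat.
           ++ apply (Hproj (C k') i Hi (proj1 (HA k' Hk'S)) x).
           ++ apply lsum_nonneg. intros j Hj. apply Rmult_le_pos; [|left; apply exp_pos].
              destruct (Nat.eqb_spec j k'); [subst; apply HD; auto|lra].
        -- intros j Hj Hne. apply Rplus_le_le_0_compat.
           ++ apply (proj2 (HA k' Hk'S)); auto. apply in_block in Hj. apply HinS; lia.
           ++ destruct (Nat.eqb_spec j k'); [congruence|lra].
      * intros j Hj. assert (HjS : In j (cols m)).
        { apply in_block in Hj. apply HinS. lia. }
        rewrite (HC j HjS). rewrite lsum_plus.
        rewrite (lsum_split (fun k' => Nat.eqb (g k') i) (cols m)). fold D.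
        f_equal.
        transitivity (lsum (block m g i) (fun k' => if Nat.eqb k' j then D j else 0)).
        -- symmetry. exact (lsum_ind (block m g i) j (fun _ => D j) (nodup_block m g i) Hj).
        -- apply lsum_ext. intros k' _. rewrite Nat.eqb_sym.
           destruct (Nat.eqb_spec j k'); subst; reflexivity.
    + intros H.
      destruct (fin_choice (fun i Ci => (forall k0, In k0 (block m g i) ->
                 AGE n A (block m g i) k0 (Ci k0)) /\
                 (forall j, In j (block m g i) -> c j = lsum (block m g i) (fun k0 => Ci k0 j)))
                 (fun _ _ => 0) k H) as [Ci HCi].
      exists (fun k' j => if Nat.eqb (g j) (g k') then Ci (g k') k' j else 0). split.
      * intros k' Hk'. apply HinS in Hk'.
        assert (Hgk : (g k' < k)%nat) by auto.
        assert (Hkb : In k' (block m g (g k'))) by (apply in_block; auto).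
        destruct (HCi (g k') Hgk) as [HA _].
        destruct (HA k' Hkb) as [HN HP].
        split.
        -- intros x. unfold Sig.
           rewrite (lsum_ext _ _ (fun j => if Nat.eqb (g j) (g k') then
                Ci (g k') k' j * exp (dot n (A j) x) else 0))
             by (intros j _; destruct (Nat.eqb (g j) (g k')); ring).
           rewrite lsum_if. apply HN.
        -- intros j Hj Hne. destruct (Nat.eqb_spec (g j) (g k')) as [E|E]; [|lra].
           apply HP; auto. apply in_block. split; auto. apply HinS; auto.
      * intros j Hj. apply HinS in Hj.
        assert (Hgj : (g j < k)%nat) by auto.
        assert (Hjb : In j (block m g (g j))) by (apply in_block; auto).
        destruct (HCi (g j) Hgj) as [_ HS].
        rewrite (HS j Hjb).
        rewrite (lsum_ext _ (fun k' => if Nat.eqb (g j) (g k') then Ci (g k') k' j else 0)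
                  (fun k' => if Nat.eqb (g k') (g j) then Ci (g j) k' j else 0)).
        -- rewrite lsum_if. reflexivity.
        -- intros k' _. rewrite Nat.eqb_sym.
           destruct (Nat.eqb_spec (g k') (g j)) as [E|E]; [rewrite E|]; reflexivity.
Qed.
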